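(* Let $E$ be a Banach lattice with an order continuous norm, let $\mathfrak{B}$ be a Boolean subalgebra of $\mathfrak{B}(E)$, let $T\colon E\to E$ be a $\mathfrak{B}$-Volterra operator and let $\xi^1,\xi^2,\xi^3$ be forward filtrations in $\mathfrak{B}$. If $S_1\in\mathcal{L}_T(\xi^1,\xi^2)$ and $S_2\in\mathcal{L}_T(\xi^2,\xi^3)$ then $S_2S_1\in\mathcal{L}_T(\xi^1,\xi^3)$. For every $S\in\mathcal{L}_T(\xi^1,\xi^2)$ there is a norm continuous operator $\hat{L}(S)\in\mathcal{L}_T(L(\xi^1),L(\xi^2))$ such that $\hat{L}(S)\circ\mathbf{s}=\mathbf{s}\circ S$.
   Context: $\mathfrak{B}(E)$ is the Boolean algebra of all order projections on $E$ ($\pi\le\rho$ iff $\pi\rho=\pi$, zero $\mathbf 0$, unit $\mathbf 1=I_E$). A positive operator $T$ is $\mathfrak{B}$-Volterra if for all $\pi\in\mathfrak{B}$, $x,y\in E$, $\pi x=\pi y$ implies $\pi Tx=\pi Ty$. A forward filtration in $\mathfrak{B}$ is a map $\xi\colon\{0,1,\dots,\infty\}\to\mathfrak{B}$ with $\xi_n\le\xi_{n+1}$, $\xi_0=\mathbf 0$, $\xi_\infty=\mathbf 1$; $L(\xi)_0=\xi_0$, $L(\xi)_n=\xi_{n+1}$ ($n\ge1$). $\mathcal{M}_b(\xi)$: sequences $(x_n)_{n\ge1}$ in $E$ with $\xi_nx_m=x_n$ for $m\ge n\ge1$ and $\sup_n\|x_n\|<\infty$; $\mathcal{M}_r(\xi)=\{x^1-x^2:x^i\in\mathcal{M}_b(\xi)^+\}$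 with regular norm $\|x\|_r=\inf\{\sup_n\|y_n\|:y\in\mathcal{M}_b(\xi)^+,\pm x\le y\}$. $\hat{T}_\xi((x_n))=(\xi_nTx_n)$; $\mathbf{s}((x_n)_{n\ge1})=(x_{n+1})_{n\ge1}$ maps $\mathcal{M}_r(\xi)$ to $\mathcal{M}_r(L(\xi))$. $\mathcal{L}_T(\eta^1,\eta^2)$ is the set of norm continuous operators $S\colon\mathcal{M}_r(\eta^1)\to\mathcal{M}_r(\eta^2)$ with $S\circ\hat{T}_{\eta^1}=\hat{T}_{\eta^2}\circ S$. *)

(* Defs.v *)
From HB Require Import structures.
From mathcomp Require Import all_boot all_order all_algebra.
From mathcomp Require Import all_classical all_reals all_analysis.
Set Implicit Arguments. Unset Strict Implicit. Unset Printing Implicit Defensive.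
Import Order.TTheory GRing.Theory Num.Theory.
Import numFieldNormedType.Exports.
Local Open Scope classical_set_scope.
Local Open Scope ring_scope.

Section BanachLattice.
Variables (R : realType) (E : completeNormedModType R) (le : E -> E -> Prop).

Definition is_sup2 (x y z : E) : Prop :=
  le x z /\ le y z /\ forall w, le x w -> le y w -> le z w.

Record banach_lattice : Prop := {
  bl_refl : forall x, le x x;
  bl_antisym : forall x y, le x y -> le y x -> x = y;
  bl_trans : forall x y z, le x y -> le y z -> le x z;
  bl_add : forall x y z, le x y -> le (x + z) (y + z);
  bl_scale : forall (a : R) x y, 0 <= a -> le x y -> le (a *: x) (a *: y);
  bl_sup : forall x y, exists z, is_sup2 x y z;
  bl_norm : forall x y ax ay, is_sup2 x (- x) ax -> is_sup2 y (- y) ay ->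
              le ax ay -> `|x| <= `|y|
}.

(* order continuous norm: every net decreasing to 0 converges to 0 in norm
   (nets written as downward directed sets indexed by themselves) *)
Definition order_continuous_norm : Prop :=
  forall D : set E, D !=set0 ->
    (forall a b, D a -> D b -> exists2 c, D c & le c a /\ le c b) ->
    (forall d, D d -> le 0 d) ->
    (forall w, (forall d, D d -> le w d) -> le w 0) ->
    forall eps : R, 0 < eps -> exists2 d0, D d0 &
      forall d, D d -> le d d0 -> `|d| < eps.

Definition linear_op (P : E -> E) : Prop :=
  forall (a : R) x y, P (a *: x + y) = a *: P x + P y.

Definition order_projection (P : E -> E) : Prop :=
  linear_op P /\ (forall x, P (P x) = P x) /\
  (forall x, le 0 x -> le 0 (P x) /\ le (P x) x).

Definition proj_le (P Q : E -> E) : Prop := forall x, P (Q x) = P x.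

Definition boolean_subalgebra (B : set (E -> E)) : Prop :=
  (forall P, B P -> order_projection P) /\
  B (fun _ => 0) /\ B id /\
  (forall P Q, B P -> B Q -> B (P \o Q)) /\
  (forall P Q, B P -> B Q -> B (fun x => P x + Q x - P (Q x))) /\
  (forall P, B P -> B (fun x => x - P x)).

Definition positive_op (T : E -> E) : Prop :=
  linear_op T /\ forall x, le 0 x -> le 0 (T x).

Definition volterra (B : set (E -> E)) (T : E -> E) : Prop :=
  positive_op T /\
  forall P x y, B P -> P x = P y -> P (T x) = P (T y).

(* forward filtration: xi n for finite n; xi_oo = 1 is implicit *)
Definition forward_filtration (B : set (E -> E)) (xi : nat -> E -> E) : Prop :=
  (forall n, B (xi n)) /\ B id /\ xi 0%N = (fun _ => 0) /\
  (forall n, proj_le (xi n) (xi n.+1)).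

Definition Lfilt (xi : nat -> E -> E) : nat -> E -> E :=
  fun n => if n is 0%N then xi 0%N else xi n.+1.

(* A sequence (x_n)_{n>=1} is encoded as x : nat -> E with x k = x_{k+1}. *)
Definition Mb (xi : nat -> E -> E) (x : nat -> E) : Prop :=
  (forall n m, (n <= m)%N -> xi n.+1 (x m) = x n) /\
  exists M : R, forall n, `|x n| <= M.

Definition Mb_pos (xi : nat -> E -> E) (x : nat -> E) : Prop :=
  Mb xi x /\ forall n, le 0 (x n).

Definition Mr (xi : nat -> E -> E) (x : nat -> E) : Prop :=
  exists y1 y2, Mb_pos xi y1 /\ Mb_pos xi y2 /\ x = (fun n => y1 n - y2 n).

Definition rnorm (xi : nat -> E -> E) (x : nat -> E) : R :=
  inf [set r : R | exists y, Mb_pos xi y /\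
        (forall n, le (x n) (y n) /\ le (- x n) (y n)) /\
        r = sup [set `|y n| | n in [set: nat]]].

Definition That (T : E -> E) (xi : nat -> E -> E) (x : nat -> E) : nat -> E :=
  fun n => xi n.+1 (T (x n)).

Definition sshift (x : nat -> E) : nat -> E := fun n => x n.+1.

Definition LT (T : E -> E) (eta1 eta2 : nat -> E -> E)
    (S : (nat -> E) -> (nat -> E)) : Prop :=
  (forall x, Mr eta1 x -> Mr eta2 (S x)) /\
  (forall (a : R) x y, Mr eta1 x -> Mr eta1 y ->
     S (fun n => a *: x n + y n) = (fun n => a *: S x n + S y n)) /\
  (forall x, Mr eta1 x -> forall eps : R, 0 < eps -> exists2 delta : R, 0 < delta &
     forall z, Mr eta1 z -> rnorm eta1 (fun n => z n - x n) < delta ->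
       rnorm eta2 (fun n => S z n - S x n) < eps) /\
  (forall x, Mr eta1 x -> S (That T eta1 x) = That T eta2 (S x)).

End BanachLattice.

(* Main.v *)
Require Import Defs.
From HB Require Import structures.
From mathcomp Require Import all_boot all_order all_algebra.
From mathcomp Require Import all_classical all_reals all_analysis.
From mathcomp Require Import lra.
Set Implicit Arguments. Unset Strict Implicit. Unset Printing Implicit Defensive.
Import Order.TTheory GRing.Theory Num.Theory.
Import numFieldNormedType.Exports.
Local Open Scope classical_set_scope.
Local Open Scope ring_scope.

Section Aux.
Variables (R : realType) (E : completeNormedModType R) (le : E -> E -> Prop).
Hypothesis hE : banach_lattice le.

Lemma le_subP a b : le a b <-> le 0 (b - a).
Proof.
split=> h.
- by have := bl_add hE (- a) h; rewrite subrr.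
- by have := bl_add hE a h; rewrite add0r subrK.
Qed.

Lemma le_neg0 a : le 0 a -> le (- a) 0.
Proof. by move=> h; have := bl_add hE (- a) h; rewrite add0r subrr. Qed.

Lemma le_add0 a b : le 0 a -> le 0 b -> le 0 (a + b).
Proof.
move=> ha hb; apply: (bl_trans hE hb).
by have := bl_add hE b ha; rewrite add0r.
Qed.

Lemma le_negpos a : le 0 a -> le (- a) a.
Proof. by move=> h; apply: (bl_trans hE (le_neg0 h)). Qed.

Lemma lin0 (P : E -> E) : linear_op P -> P 0 = 0.
Proof.
move=> hP; have := hP 1 0 0; rewrite !scale1r addr0 => h.
by apply: (addrI (P 0)); rewrite -h addr0.
Qed.

Lemma linD (P : E -> E) x y : linear_op P -> P (x + y) = P x + P y.
Proof. by move=> hP; have := hP 1 x y; rewrite !scale1r. Qed.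

Lemma linZ (P : E -> E) (a : R) x : linear_op P -> P (a *: x) = a *: P x.
Proof. by move=> hP; rewrite -(addr0 (a *: x)) hP lin0 // addr0. Qed.

Lemma linN (P : E -> E) x : linear_op P -> P (- x) = - P x.
Proof. by move=> hP; rewrite -scaleN1r linZ // scaleN1r. Qed.

Lemma linB (P : E -> E) x y : linear_op P -> P (x - y) = P x - P y.
Proof. by move=> hP; rewrite linD // linN. Qed.

Lemma pos_mono (P : E -> E) a b : linear_op P -> (forall x, le 0 x -> le 0 (P x)) ->
  le a b -> le (P a) (P b).
Proof.
move=> hP hpos /le_subP h; apply/le_subP; rewrite -linB //; exact: hpos.
Qed.

Lemma proj_norm (P : E -> E) v : order_projection le P -> le 0 v -> `|P v| <= `|v|.
Proof.
move=> [hl [hi hp]] hv.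
have [ax hax] := bl_sup hE (P v) (- P v).
have [ay hay] := bl_sup hE v (- v).
apply: (bl_norm hE hax hay).
have [h1 h2] := hp v hv.
case: hax => _ [_ hax]; apply: hax.
- by apply: (bl_trans hE h2); case: hay.
- apply: (bl_trans hE (le_neg0 h1)); apply: (bl_trans hE hv); by case: hay.
Qed.

Lemma has_sup_norms (y : nat -> E) M : (forall n, `|y n| <= M) ->
  has_sup [set `|y n| | n in [set: nat]].
Proof.
move=> hM; split; first by exists `|y 0%N|; exists 0%N.
by exists M => _ [n _ <-].
Qed.

Lemma norms_le_sup (y : nat -> E) M : (forall n, `|y n| <= M) -> forall n,
  `|y n| <= sup [set `|y n| | n in [set: nat]].
Proof.
move=> hM n; apply: sup_upper_bound; first exact: has_sup_norms hM.
by exists n.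
Qed.

Lemma rnorm_le xi x y : Mb_pos le xi y ->
  (forall n, le (x n) (y n) /\ le (- x n) (y n)) ->
  rnorm le xi x <= sup [set `|y n| | n in [set: nat]].
Proof.
move=> hy hd; apply: ge_inf; last by exists y.
exists 0 => _ [z [[[_ [M hM]] _] [_ ->]]].
exact: le_trans (normr_ge0 _) (norms_le_sup hM 0%N).
Qed.

Lemma rnorm_lt xi x (eps : R) :
  (exists y, Mb_pos le xi y /\ forall n, le (x n) (y n) /\ le (- x n) (y n)) ->
  rnorm le xi x < eps ->
  exists y, [/\ Mb_pos le xi y, (forall n, le (x n) (y n) /\ le (- x n) (y n))
           & sup [set `|y n| | n in [set: nat]] < eps].
Proof.
move=> [y0 [hy0 hd0]] hlt.
have hne : [set r : R | exists y, Mb_pos le xi y /\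
        (forall n, le (x n) (y n) /\ le (- x n) (y n)) /\
        r = sup [set `|y n| | n in [set: nat]]] !=set0.
  by exists (sup [set `|y0 n| | n in [set: nat]]); exists y0.
have [r [y [hy [hd ->]]] hr] := inf_lt hne hlt.
by exists y; split.
Qed.


Section Filt.
Variable xi : nat -> E -> E.
Hypothesis hxi : forall n, order_projection le (xi n).
Hypothesis hle : forall n, proj_le (xi n) (xi n.+1).

Lemma xi_lin n : linear_op (xi n). Proof. by case: (hxi n). Qed.

Lemma Mbpos_add y1 y2 : Mb_pos le xi y1 -> Mb_pos le xi y2 ->
  Mb_pos le xi (fun n => y1 n + y2 n).
Proof.
move=> [[h1 [M1 hM1]] p1] [[h2 [M2 hM2]] p2]; split; [split|].
- by move=> n m hnm; rewrite (linD _ _ (xi_lin n.+1)) h1 // h2.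
- exists (M1 + M2) => n; apply: le_trans (ler_normD _ _) _; exact: lerD.
- by move=> n; apply: le_add0.
Qed.

Lemma Mr_sub z x : Mr le xi z -> Mr le xi x -> Mr le xi (fun n => z n - x n).
Proof.
move=> [a1 [a2 [ha1 [ha2 ->]]]] [b1 [b2 [hb1 [hb2 ->]]]].
exists (fun n => a1 n + b2 n), (fun n => a2 n + b1 n); split; first exact: Mbpos_add.
split; first exact: Mbpos_add.
by apply: funext => n; rewrite opprB opprD addrACA.
Qed.

Lemma Mr_dom x : Mr le xi x ->
  exists y, Mb_pos le xi y /\ forall n, le (x n) (y n) /\ le (- x n) (y n).
Proof.
move=> [y1 [y2 [h1 [h2 ->]]]]; exists (fun n => y1 n + y2 n); split.
  exact: Mbpos_add.
move=> n; have p1 := h1.2 n; have p2 := h2.2 n; split.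
- have h := bl_add hE (y1 n) (le_negpos p2).
  by rewrite addrC [y1 n + _]addrC.
- have h := bl_add hE (y2 n) (le_negpos p1).
  by rewrite opprB addrC.
Qed.

Definition ush (y : nat -> E) : nat -> E :=
  fun n => if n is k.+1 then y k else xi 1%N (y 0%N).

Lemma ush_Mb y : Mb (Lfilt xi) y -> Mb xi (ush y).
Proof.
move=> [hy [M hM]]; split.
- case=> [|n] [|m] //= hnm.
  + by case: (hxi 1%N) => _ [-> _].
  + by rewrite -(hy 0%N m) //= hle.
  + exact: hy.
- exists (M + `|xi 1%N (y 0%N)|); case=> [|n] /=.
  + have := le_trans (normr_ge0 _) (hM 0%N); lra.
  + have := hM n; have := normr_ge0 (xi 1%N (y 0%N)); lra.
Qed.

Lemma ush_pos y : Mb_pos le (Lfilt xi) y -> Mb_pos le xi (ush y).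
Proof.
move=> [hy hp]; split; first exact: ush_Mb.
case=> [|n] //=; case: (hxi 1%N) => _ [_ h]; exact: (h _ (hp 0%N)).1.
Qed.

Lemma ush_sub z x : ush (fun n => z n - x n) = (fun n => ush z n - ush x n).
Proof. by apply: funext; case=> [|n] //=; rewrite /ush (linB _ _ (xi_lin 1%N)). Qed.

Lemma ush_lin (a : R) z x :
  ush (fun n => a *: z n + x n) = (fun n => a *: ush z n + ush x n).
Proof. by apply: funext; case=> [|n] //=; rewrite /ush (xi_lin 1%N). Qed.

Lemma ush_Mr y : Mr le (Lfilt xi) y -> Mr le xi (ush y).
Proof.
move=> [y1 [y2 [h1 [h2 ->]]]]; exists (ush y1), (ush y2); split; first exact: ush_pos.
by split; [exact: ush_pos | rewrite ush_sub].
Qed.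

Lemma sshift_ush x : Mr le xi x -> ush (sshift x) = x.
Proof.
move=> [y1 [y2 [h1 [h2 ->]]]]; apply: funext; case=> [|n] //=.
rewrite /ush /sshift (linB _ _ (xi_lin 1%N)).
by rewrite (h1.1.1 0%N 1%N) // (h2.1.1 0%N 1%N).
Qed.

Lemma sshift_Mb w : Mb xi w -> Mb (Lfilt xi) (sshift w).
Proof.
move=> [hw [M hM]]; split; last by exists M => n; exact: hM.
by move=> n m hnm /=; rewrite /sshift hw.
Qed.

Lemma sshift_Mr w : Mr le xi w -> Mr le (Lfilt xi) (sshift w).
Proof.
move=> [y1 [y2 [h1 [h2 ->]]]]; exists (sshift y1), (sshift y2).
split; first by split; [exact: sshift_Mb h1.1 | move=> n; exact: h1.2].
by split; first by split; [exact: sshift_Mb h2.1 | move=> n; exact: h2.2].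
Qed.

Lemma ush_That (T : E -> E) y :
  (forall x y, xi 1%N x = xi 1%N y -> xi 1%N (T x) = xi 1%N (T y)) ->
  ush (That T (Lfilt xi) y) = That T xi (ush y).
Proof.
move=> hV; apply: funext; case=> [|n] //=; rewrite /That /= hle.
apply: hV; by case: (hxi 1%N) => _ [-> _].
Qed.

End Filt.

Lemma sshift_That (T : E -> E) xi w :
  sshift (That T xi w) = That T (Lfilt xi) (sshift w).
Proof. by []. Qed.

End Aux.

Theorem proposition4p17 (R : realType) (E : completeNormedModType R)
  (le : E -> E -> Prop) (hE : banach_lattice le)
  (hoc : order_continuous_norm le)
  (B : set (E -> E)) (hB : boolean_subalgebra le B)
  (T : E -> E) (hT : volterra le B T)
  (xi1 xi2 xi3 : nat -> E -> E)
  (h1 : forward_filtration B xi1) (h2 : forward_filtration B xi2)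
  (h3 : forward_filtration B xi3) :
  (forall S1 S2, LT le T xi1 xi2 S1 -> LT le T xi2 xi3 S2 ->
     LT le T xi1 xi3 (S2 \o S1)) /\
  (forall S, LT le T xi1 xi2 S ->
     exists LS, LT le T (Lfilt xi1) (Lfilt xi2) LS /\
       forall x, Mr le xi1 x -> LS (sshift x) = sshift (S x)).
Proof.
split.
  move=> S1 S2 [m1 [l1 [c1 t1]]] [m2 [l2 [c2 t2]]]; split; [|split; [|split]].
  - by move=> x hx; apply: m2; apply: m1.
  - by move=> a x y hx hy /=; rewrite l1 // l2 //; apply: m1.
  - move=> x hx eps he; have [d2 hd2 H2] := c2 _ (m1 _ hx) eps he.
    have [d1 hd1 H1] := c1 _ hx d2 hd2; exists d1 => // z hz hzx.
    by apply: H2; [apply: m1 | apply: H1].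
  - by move=> x hx /=; rewrite t1 // t2 //; apply: m1.
have P1 : forall n, order_projection le (xi1 n) := fun n => hB.1 _ (h1.1 n).
have P2 : forall n, order_projection le (xi2 n) := fun n => hB.1 _ (h2.1 n).
have LP1 : forall n, order_projection le (Lfilt xi1 n) by case=> [|n]; apply: P1.
have LP2 : forall n, order_projection le (Lfilt xi2 n) by case=> [|n]; apply: P2.
have hle1 : forall n, proj_le (xi1 n) (xi1 n.+1) := h1.2.2.2.
have hV1 : forall x y, xi1 1%N x = xi1 1%N y -> xi1 1%N (T x) = xi1 1%N (T y).
  by move=> x y; apply: hT.2; exact: h1.1.
move=> S [m [l [c t]]].
exists (fun y => sshift (S (ush xi1 y))); split; last first.
  by move=> x hx; rewrite (sshift_ush P1 hx).
split; [|split; [|split]].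
- move=> y hy; apply: sshift_Mr => //; apply: m; exact: ush_Mr.
- move=> a x y hx hy; rewrite (ush_lin P1) l //; exact: ush_Mr.
- move=> x hx eps he.
  have hx' := ush_Mr P1 hle1 hx.
  have [d hd H] := c _ hx' eps he; exists d => // z hz hzx.
  have hdz : Mr le (Lfilt xi1) (fun n => z n - x n) by apply: Mr_sub.
  have [y [hy hdom hsup]] := rnorm_lt (Mr_dom hE LP1 hdz) hzx.
  have : rnorm le xi1 (fun n => ush xi1 z n - ush xi1 x n) < d.
    rewrite -(ush_sub P1); apply: le_lt_trans (rnorm_le (ush_pos P1 hle1 hy) _) _.
    + case=> [|n] /=; last exact: hdom n.
      have [l1 [_ pos1]] := P1 1%N.
      have pm := pos_mono hE l1 (fun x hx => (pos1 x hx).1).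
      rewrite /ush -(linN _ l1); split; apply: pm; [exact: (hdom 0%N).1 | exact: (hdom 0%N).2].
    + apply: le_lt_trans hsup; apply: ge_sup; first by exists `|ush xi1 y 0%N|; exists 0%N.
      have [[_ [M hM]] pos] := hy.
      move=> _ [[|n] _ <-] /=.
      * rewrite /ush; apply: le_trans (proj_norm hE (P1 1%N) (pos 0%N)) _; exact: norms_le_sup hM 0%N.
      * exact: norms_le_sup hM n.
  move=> /H H'; have {H'} H' := H' (ush_Mr P1 hle1 hz).
  have hw : Mr le xi2 (fun n => S (ush xi1 z) n - S (ush xi1 x) n).
    by apply: Mr_sub => //; apply: m => //; apply: ush_Mr.
  have [y' [hy' hdom' hsup']] := rnorm_lt (Mr_dom hE P2 hw) H'.
  have hsy : Mb_pos le (Lfilt xi2) (sshift y').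
    by split; [exact: sshift_Mb hy'.1 | move=> n; exact: hy'.2].
  apply: le_lt_trans (rnorm_le hsy (fun n => hdom' n.+1)) _.
  apply: le_lt_trans hsup'; apply: ge_sup; first by exists `|sshift y' 0%N|; exists 0%N.
  have [[_ [M hM]] _] := hy'.
  move=> _ [n _ <-]; exact: norms_le_sup hM n.+1.
- move=> y hy; rewrite (ush_That P1 hle1 y hV1) t //; exact: ush_Mr.
Qed.
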